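(* Let $(\Gamma,d)$ be a countable discrete metric space admitting an $F$-function, and let $(\mathcal{A},\{\mathcal{A}_X\}_{X\in\mathcal{P}_0(\Gamma)},\Phi)$ be a quantum many-body system satisfying (A1) whose interaction is bounded and has finite range $\mathfrak{r}>0$. Fix $X\in\mathcal{P}_0(\Gamma)$ and $n>0$, and put \[ H_{R,n}:=\sum_{Y\in\mathcal{P}_0(\Gamma),\ Y\cap X_{\mathrm{int}}(n+\mathfrak{r})\neq\emptyset}\Phi(Y). \] Then \[ \|[H_\Lambda,H_{R,n}]\|\le2\mathfrak{j}'\mathfrak{j}''\,|\partial_\Phi(X_{\mathrm{int}}(n+\mathfrak{r}))|\quad\text{for every }\Lambda\in\mathcal{P}_0(\Gamma)\text{ with }\Lambda\supseteq X_{\mathrm{int}}(n+\mathfrak{r}), \] \[ \|[H_\Lambda,H_{X(n+\mathfrak{r})}]\|\le2\mathfrak{j}'\mathfrak{j}''\,|\partial_\Phi(X(n+\mathfrak{r}))|\quad\text{for every }\Lambda\in\mathcal{P}_0(\Gamma)\text{ with }\Lambda\supseteq X(n+\mathfrak{r}). \]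
   Context: $(\Gamma,d)$ is a countable discrete metric space, $\mathcal{P}_0(\Gamma)$ its finite subsets, $\Lambda^c:=\Gamma\setminus\Lambda$, $d(x,\Lambda):=\inf_{y\in\Lambda}d(x,y)$, $\mathrm{diam}(Y):=\sup_{x,y\in Y}d(x,y)$. An $F$-function is a non-increasing $F:[0,\infty)\to(0,\infty)$ with $\sup_{x}\sum_{y}F(d(x,y))<\infty$ and $\sup_{x,y}\sum_{z}F(d(x,z))F(d(z,y))/F(d(x,y))<\infty$. A quantum many-body system is a triple $(\mathcal{A},\{\mathcal{A}_X\},\Phi)$: $\mathcal{A}$ a unital $C^*$-algebra, $\{\mathcal{A}_X\}_{X\in\mathcal{P}_0(\Gamma)}$ an increasing net of simple $C^*$-subalgebras with norm-dense union $\mathcal{A}_{\mathrm{loc}}$, $\Phi:\mathcal{P}_0(\Gamma)\to\mathcal{A}_{\mathrm{loc}}$ with $\Phi(X)=\Phi(X)^*\in\mathcal{A}_X$; for $\Lambda\subseteq\Gamma$, $\mathcal{A}_\Lambda$ is generated by the $\mathcal{A}_X$ with $X\subseteq\Lambda$ finite. (A1): $\Phi(X)$ commutes with $\mathcal{A}_{X^c}$. Bounded: $\sup_x\sum_{Y\ni x}\|\Phi(Y)\|/|Y|<\infty$; finite range $\mathfrak{r}$: $\Phi(Y)=0$ if $\mathrm{diam}(Y)>\mathfrak{r}$. $\mathfrak{j}':=\sup_x\sum_{Y\in\mathcal{P}_0(\Gamma),x\in Y}\|\Phi(Y)\|$, $\mathfrak{j}'':=\sup_x\sum_{Y\in\mathcal{P}_0(\Gamma),x\in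 Y}|Y|\|\Phi(Y)\|$. For $\Lambda\subseteq\Gamma$ finite, $H_\Lambda:=\sum_{Y\subseteq\Lambda}\Phi(Y)$. $\partial_\Phi\Lambda:=\{x\in\Lambda:\exists Y\in\mathcal{P}_0(\Gamma),\ x\in Y,\ Y\cap\Lambda^c\neq\emptyset,\ \Phi(Y)\neq0\}$. $X_{\mathrm{int}}(m):=\{x\in\Gamma:d(x,X^c)>m\}$, $X(m):=\{x\in\Gamma:d(x,X)\le m\}$. *)

(* Defs.v *)
From HB Require Import structures.
From mathcomp Require Import all_boot all_order all_algebra.
From mathcomp Require Import finmap.
From mathcomp Require Import all_classical all_reals all_analysis.
From mathcomp Require Import complex.
Set Implicit Arguments. Unset Strict Implicit. Unset Printing Implicit Defensive.
Import Order.TTheory GRing.Theory Num.Theory.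
Local Open Scope classical_set_scope.
Local Open Scope ring_scope.

Section Defs.
Variable R : realType.
Local Notation C := (R[i]).

Section Cstar.
Variables (A : algType C) (star : A -> A) (nrm : A -> R).

Definition norm_lim (u : nat -> A) (l : A) : Prop :=
  forall e : R, 0 < e -> exists N, forall n, (N <= n)%N -> nrm (u n - l) < e.

Definition norm_complete : Prop := forall u : nat -> A,
  (forall e : R, 0 < e -> exists N, forall m n, (N <= m)%N -> (N <= n)%N ->
       nrm (u m - u n) < e) ->
  exists l, norm_lim u l.

Record is_CstarAlg : Prop := {
  nrm_ge0 : forall a, 0 <= nrm a;
  nrm_eq0 : forall a, nrm a = 0 -> a = 0;
  nrm_triangle : forall a b, nrm (a + b) <= nrm a + nrm b;
  nrm_scale : forall (l : C) a, ((nrm (l *: a))%:C)%C = `|l| * ((nrm a)%:C)%C;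
  nrm_submul : forall a b, nrm (a * b) <= nrm a * nrm b;
  nrm_complete : norm_complete;
  star_add : forall a b, star (a + b) = star a + star b;
  star_scale : forall (l : C) a, star (l *: a) = (l^*)%C *: star a;
  star_mul : forall a b, star (a * b) = star b * star a;
  star_invol : forall a, star (star a) = a;
  cstar_identity : forall a, nrm (star a * a) = nrm a ^+ 2
}.

Definition norm_closed (B : set A) : Prop :=
  forall u l, (forall n, B (u n)) -> norm_lim u l -> B l.

Definition is_Cstar_sub (B : set A) : Prop :=
  [/\ B 0 /\ (forall a b, B a -> B b -> B (a + b)),
      (forall (l : C) a, B a -> B (l *: a)),
      (forall a b, B a -> B b -> B (a * b)),
      (forall a, B a -> B (star a)) & norm_closed B].

Definition is_closed_ideal (B I : set A) : Prop :=
  [/\ I `<=` B /\ I 0, (forall a b, I a -> I b -> I (a + b)),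
      (forall (l : C) a, I a -> I (l *: a)),
      (forall a b, B a -> I b -> I (a * b) /\ I (b * a)) & norm_closed I].

Definition is_simple (B : set A) : Prop :=
  forall I, is_closed_ideal B I -> I = [set 0] \/ I = B.

Definition commutator (a b : A) : A := a * b - b * a.
End Cstar.

Section Metric.
Variables (G : countType) (d : G -> G -> R).

Definition is_metric : Prop :=
  [/\ (forall x y, 0 <= d x y), (forall x y, d x y = 0 <-> x = y),
      (forall x y, d x y = d y x) & (forall x y z, d x z <= d x y + d y z)].

Definition is_discrete : Prop :=
  forall x, exists2 e : R, 0 < e & forall y, d x y < e -> y = x.

Definition is_Ffunction (F : R -> R) : Prop :=
  [/\ (forall r, 0 <= r -> 0 < F r),
      (forall r s, 0 <= r -> r <= s -> F s <= F r),
      (exists M : R, forall x, (\esum_(y in [set: G]) (F (d x y))%:E <= M%:E)%E) &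
      (exists M : R, forall x y,
          (\esum_(z in [set: G]) (F (d x z) * F (d z y) / F (d x y))%:E <= M%:E)%E)].

Definition fin (Y : {fset G}) : set G := [set x | x \in Y].

(* d(x, L) = inf_{y in L} d(x,y), with inf of the empty set = +oo *)
Definition dist_set (x : G) (L : set G) : \bar R :=
  ereal_inf [set (d x y)%:E | y in L].

Definition diam (Y : {fset G}) : \bar R :=
  ereal_sup [set (d x y)%:E | x in fin Y & y in fin Y].

Definition Xint (X : {fset G}) (m : R) : set G :=
  [set x | (m%:E < dist_set x (~` fin X))%E].
Definition Xnbhd (X : {fset G}) (m : R) : set G :=
  [set x | (dist_set x (fin X) <= m%:E)%E].
End Metric.

Section QMBS.
Variables (G : countType) (A : algType C) (star : A -> A) (nrm : A -> R)
  (AX : {fset G} -> set A) (Phi : {fset G} -> A).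

Definition Agen (L : set G) : set A :=
  [set a | forall B, is_Cstar_sub star nrm B ->
     (forall X : {fset G}, fin X `<=` L -> AX X `<=` B) -> B a].

Definition is_QMBS : Prop :=
  [/\ is_CstarAlg star nrm,
      (forall X, is_Cstar_sub star nrm (AX X) /\ is_simple nrm (AX X)),
      (forall X Y : {fset G}, (X `<=` Y)%fset -> AX X `<=` AX Y),
      (forall a e, 0 < e -> exists X b, AX X b /\ nrm (a - b) < e) &
      (forall X, Phi X = star (Phi X) /\ AX X (Phi X))].

Definition A1 : Prop :=
  forall X b, Agen (~` fin X) b -> Phi X * b = b * Phi X.

Definition bounded_interaction : Prop :=
  exists M : R, forall x : G,
    (\esum_(Y in [set Y : {fset G} | x \in Y]) (nrm (Phi Y) / #|` Y|%:R)%:E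
       <= M%:E)%E.

Definition finite_range (d : G -> G -> R) (r : R) : Prop :=
  forall Y, (r%:E < diam d Y)%E -> Phi Y = 0.

Definition jprime : \bar R :=
  ereal_sup [set \esum_(Y in [set Y : {fset G} | x \in Y]) (nrm (Phi Y))%:E
            | x in [set: G]].
Definition jsecond : \bar R :=
  ereal_sup [set \esum_(Y in [set Y : {fset G} | x \in Y])
                 (#|` Y|%:R * nrm (Phi Y))%:E | x in [set: G]].

Definition Hset (L : set G) : A :=
  \sum_(Y \in [set Y : {fset G} | fin Y `<=` L]) Phi Y.

Definition Hmeet (L : set G) : A :=
  \sum_(Y \in [set Y : {fset G} | fin Y `&` L !=set0]) Phi Y.

Definition boundary (L : set G) : set G :=
  [set x | L x /\ exists Y : {fset G},
       [/\ x \in Y, fin Y `&` ~` L !=set0 & Phi Y <> 0]].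
End QMBS.
End Defs.

(* Main.v *)
Require Import Defs.
From HB Require Import structures.
From mathcomp Require Import all_boot all_order all_algebra.
From mathcomp Require Import finmap.
From mathcomp Require Import all_classical all_reals all_analysis.
From mathcomp Require Import complex.
Import Order.TTheory GRing.Theory Num.Theory.
Local Open Scope classical_set_scope.
Local Open Scope ring_scope.
Lemma nrm0L {R : realType} {A : algType R[i]} {star : A -> A} {nrm : A -> R} :
  is_CstarAlg star nrm -> nrm 0 = 0.
Proof.
move=> CA; have := nrm_scale CA 0 0; rewrite scale0r normr0 mul0r.
by move/(congr1 (@complex.Re R)).
Qed.

Lemma nrmNL {R : realType} {A : algType R[i]} {star : A -> A} {nrm : A -> R} a :
  is_CstarAlg star nrm -> nrm (- a) = nrm a.
Proof.
move=> CA; have := nrm_scale CA (-1) a; rewrite scaleN1r normrN1 mul1r.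
by move/(congr1 (@complex.Re R)).
Qed.

Lemma nrm_sumL {R : realType} {A : algType R[i]} {star : A -> A} {nrm : A -> R}
  (I : Type) (s : seq I) (P : pred I) (F : I -> A) :
  is_CstarAlg star nrm -> nrm (\sum_(i <- s | P i) F i) <= \sum_(i <- s | P i) nrm (F i).
Proof.
move=> CA; elim: s => [|x s IH]; first by rewrite !big_nil (nrm0L CA).
rewrite !big_cons; case: (P x) => //.
by apply: le_trans (nrm_triangle CA _ _) _; rewrite lerD2l.
Qed.

Lemma comm_boundL {R : realType} {A : algType R[i]} {star : A -> A} {nrm : A -> R} a b :
  is_CstarAlg star nrm -> nrm (commutator a b) <= 2 * nrm a * nrm b.
Proof.
move=> CA; rewrite /commutator; apply: le_trans (nrm_triangle CA _ _) _.
rewrite (nrmNL _ CA) mulr2n -mulrA mulrDl.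
rewrite mul1r; apply: lerD; first exact: (nrm_submul CA).
rewrite [X in _ <= X]mulrC; exact: (nrm_submul CA).
Qed.

Lemma commDl {R : realType} {A : algType R[i]} (x y z : A) :
  commutator (x + y) z = commutator x z + commutator y z.
Proof. by rewrite /commutator mulrDl mulrDr opprD addrACA. Qed.

Lemma commDr {R : realType} {A : algType R[i]} (x y z : A) :
  commutator z (x + y) = commutator z x + commutator z y.
Proof. by rewrite /commutator mulrDl mulrDr opprD addrACA. Qed.

Lemma comm_sum {R : realType} {A : algType R[i]} (I J : Type) (s : seq I) (t : seq J)
  (P : pred I) (Q : pred J) (f : I -> A) (g : J -> A) :
  commutator (\sum_(i <- s | P i) f i) (\sum_(j <- t | Q j) g j) =
  \sum_(i <- s | P i) \sum_(j <- t | Q j) commutator (f i) (g j).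
Proof.
rewrite /commutator.
transitivity (\sum_(i <- s | P i) (\sum_(j <- t | Q j) f i * g j - \sum_(j <- t | Q j) g j * f i)).
  rewrite sumrB mulr_suml; congr (_ - _).
    by apply: eq_bigr => i _; rewrite mulr_sumr.
  rewrite mulr_suml exchange_big; apply: eq_bigr => j _; by rewrite mulr_sumr.
by apply: eq_bigr => i _; rewrite sumrB.
Qed.

Lemma nrm_dsumL {R : realType} {A : algType R[i]} {star : A -> A} {nrm : A -> R}
  (I J : Type) (s : seq I) (t : seq J) (P : pred I) (Q : pred J) (F : I -> J -> A) :
  is_CstarAlg star nrm ->
  nrm (\sum_(i <- s | P i) \sum_(j <- t | Q j) F i j) <=
  \sum_(i <- s | P i) \sum_(j <- t | Q j) nrm (F i j).
Proof.
move=> CA; apply: le_trans (nrm_sumL _ _ _ _ CA) _.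
apply: ler_sum => i _; exact: (nrm_sumL _ _ _ _ CA).
Qed.

Lemma eIL {R : realType} {A : algType R[i]} {T : eqType} (Phi : T -> A) {s1 s2 : seq T} :
  uniq s1 -> uniq s2 ->
  \sum_(Y <- s1 | Y \in s2) Phi Y = \sum_(Z <- s2 | Z \in s1) Phi Z.
Proof.
move=> u1 u2.
rewrite -big_filter -[RHS]big_filter.
apply: perm_big; apply: uniq_perm; rewrite ?filter_uniq //.
by move=> x; rewrite !mem_filter andbC.
Qed.

Lemma comm_split {R : realType} {A : algType R[i]} {star : A -> A} {nrm : A -> R}
  (T : eqType) (Phi : T -> A) (s1 s2 : seq T) :
  is_CstarAlg star nrm -> uniq s1 -> uniq s2 ->
  nrm (commutator (\sum_(Y <- s1) Phi Y) (\sum_(Z <- s2) Phi Z)) <=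
  \sum_(Y <- s1) \sum_(Z <- s2)
     (if (Y \notin s2) || (Z \notin s1) then nrm (commutator (Phi Y) (Phi Z)) else 0).
Proof.
move=> CA u1 u2.
rewrite (@bigID _ _ _ _ s1 (fun Y => Y \in s2)) /= (@bigID _ _ _ _ s2 (fun Z => Z \in s1)) /=.
have eI := eIL Phi u1 u2.
rewrite commDl !commDr.
rewrite [X in X + _ + _](_ : _ = 0) ?add0r; last by rewrite eI /commutator subrr.
have -> : \sum_(Y <- s1) \sum_(Z <- s2)
     (if (Y \notin s2) || (Z \notin s1) then nrm (commutator (Phi Y) (Phi Z)) else 0) =
   \sum_(Y <- s1 | Y \in s2) \sum_(Z <- s2 | Z \notin s1) nrm (commutator (Phi Y) (Phi Z)) +
   (\sum_(Y <- s1 | Y \notin s2) \sum_(Z <- s2 | Z \in s1) nrm (commutator (Phi Y) (Phi Z)) +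
    \sum_(Y <- s1 | Y \notin s2) \sum_(Z <- s2 | Z \notin s1) nrm (commutator (Phi Y) (Phi Z))).
  rewrite (@bigID _ _ _ _ s1 (fun Y => Y \in s2)) /=; congr (_ + _).
    apply: eq_bigr => Y ->; rewrite [RHS]big_mkcond /=; apply: eq_bigr => Z _.
    by case: (Z \in s1).
  rewrite -big_split /=; apply: eq_bigr => Y /negPf ->.
  by rewrite (@bigID _ _ _ _ s2 (fun Z => Z \in s1)).
apply: le_trans (nrm_triangle CA _ _) _; apply: lerD.
  by rewrite comm_sum; apply: (nrm_dsumL _ _ _ _ _ _ _ CA).
apply: le_trans (nrm_triangle CA _ _) _; apply: lerD.
  by rewrite comm_sum; apply: (nrm_dsumL _ _ _ _ _ _ _ CA).
by rewrite comm_sum; apply: (nrm_dsumL _ _ _ _ _ _ _ CA).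
Qed.

Lemma sum_ge_term {R : realType} {I : eqType} (s : seq I) (F : I -> R) (j : I) :
  j \in s -> uniq s -> (forall i, 0 <= F i) -> F j <= \sum_(i <- s) F i.
Proof.
move=> js us F0; rewrite (bigD1_seq j js us) /= lerDl.
by apply: sumr_ge0 => i _.
Qed.

Lemma comb_bound {R : realType} {G : choiceType} (a : {fset G} -> R) (D : seq G)
  (sP sQ : seq {fset G}) (cond : {fset G} -> {fset G} -> bool) :
  uniq D -> (forall P, 0 <= a P) ->
  (forall P Q, P \in sP -> Q \in sQ -> cond P Q ->
     (exists x, x \in D /\ x \in P) /\ (exists z, z \in P /\ z \in Q)) ->
  \sum_(P <- sP) \sum_(Q <- sQ) (if cond P Q then 2 * a P * a Q else 0) <=
  \sum_(x <- D) \sum_(P <- sP | x \in P)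
      (2 * a P * \sum_(z <- enum_fset P) \sum_(Q <- sQ | z \in Q) a Q).
Proof.
move=> uD a0 H.
set f := fun P => 2 * a P * \sum_(z <- enum_fset P) \sum_(Q <- sQ | z \in Q) a Q.
have f0 : forall P, 0 <= f P.
  move=> P; rewrite /f; apply: mulr_ge0; first by apply: mulr_ge0 => //.
  by apply: sumr_ge0 => z _; apply: sumr_ge0.
under [X in _ <= X]eq_bigr do rewrite big_mkcond.
rewrite [X in _ <= X]exchange_big /=.
rewrite [X in X <= _]big_seq [X in _ <= X]big_seq; apply: ler_sum => P PsP.
have [/hasP [Q0 Q0s c0]|nh] := boolP (has (cond P) sQ); last first.
  rewrite big1_seq; last first.
    move=> Q /andP [_ QsQ]; case: ifP => // cPQ; case/negP: nh; apply/hasP.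
    by exists Q.
  apply: sumr_ge0 => x _; case: ifP => _ //; exact: f0.
have [[x0 [x0D x0P]] _] := H P Q0 PsP Q0s c0.
apply: le_trans (sum_ge_term D (fun x => if x \in P then f P else 0) x0 x0D uD _); last first.
  by move=> x; case: ifP => _ //; exact: f0.
rewrite x0P /f mulr_sumr.
under [X in _ <= X]eq_bigr do rewrite mulr_sumr big_mkcond.
rewrite [X in _ <= X]exchange_big /= big_seq [X in _ <= X]big_seq.
apply: ler_sum => Q QsQ.
case: ifP => cPQ; last first.
  by apply: sumr_ge0 => z _; case: ifP => // _; apply: mulr_ge0 => //; apply: mulr_ge0.
have [_ [z0 [z0P z0Q]]] := H P Q PsP QsQ cPQ.
apply: le_trans (sum_ge_term (enum_fset P) (fun z => if z \in Q then 2 * a P * a Q else 0) z0 z0P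
   (fset_uniq P) _); first by rewrite z0Q.
by move=> z; case: ifP => // _; apply: mulr_ge0 => //; apply: mulr_ge0.
Qed.

Lemma sum1_sizeR {R : realType} {I : Type} (s : seq I) :
  \sum_(i <- s) (1 : R) = (size s)%:R.
Proof. by elim: s => [|x s IH]; rewrite ?big_nil ?big_cons ?IH //= mulrS. Qed.

Lemma sume_cst {R : realType} {I : Type} (s : seq I) (c : \bar R) :
  (0 <= c)%E -> (\sum_(i <- s) c = c * (size s)%:R%:E)%E.
Proof.
move=> c0; rewrite -sum1_sizeR -sumEFin ge0_sume_distrr //.
by apply: eq_bigr => i _; rewrite mule1.
Qed.

Lemma ereal_bound {R : realType} {G : choiceType} (a : {fset G} -> R) (D : seq G)
  (sP sQ : seq {fset G}) (j1 j2 : \bar R) :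
  (forall P, 0 <= a P) ->
  (forall z, ((\sum_(Q <- sQ | z \in Q) a Q)%:E <= j1)%E) ->
  (forall x, ((\sum_(P <- sP | x \in P) (#|` P|%:R * a P))%:E <= j2)%E) ->
  ((\sum_(x <- D) \sum_(P <- sP | x \in P)
      (2 * a P * \sum_(z <- enum_fset P) \sum_(Q <- sQ | z \in Q) a Q))%:E
   <= 2%:E * j1 * j2 * (size D)%:R%:E)%E.
Proof.
move=> a0 H1 H2.
case: D => [|x0 D']; first by rewrite big_nil mule0.
have j10 : (0 <= j1)%E.
  by apply: le_trans (H1 x0); rewrite lee_fin; apply: sumr_ge0.
have j20 : (0 <= j2)%E.
  apply: le_trans (H2 x0); rewrite lee_fin; apply: sumr_ge0 => P _.
  by apply: mulr_ge0.
have c0 : (0 <= 2%:E * j1 * j2)%E by apply: mule_ge0 => //; apply: mule_ge0.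
rewrite -(sume_cst _ _ c0) -sumEFin; apply: lee_sum => x _.
rewrite -sumEFin.
apply: (@le_trans _ _ (\sum_(P <- sP | x \in P) (2%:E * j1 * (#|` P|%:R * a P)%:E))%E).
  apply: lee_sum => P _.
  rewrite EFinM.
  have inner : ((\sum_(z <- enum_fset P) \sum_(Q <- sQ | z \in Q) a Q)%:E <=
                j1 * (#|` P|%:R)%:E)%E.
    rewrite -sumEFin; apply: (@le_trans _ _ (\sum_(z <- enum_fset P) j1)%E).
      by apply: lee_sum => z _; exact: H1.
    by rewrite sume_cst.
  apply: le_trans (lee_wpmul2l _ inner) _.
    by rewrite lee_fin; apply: mulr_ge0 => //; apply: a0.
  rewrite le_eqVlt; apply/orP; left; apply/eqP.
  by rewrite !EFinM -!muleA (muleCA (a P)%:E) (muleC (a P)%:E).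
have -> : (\sum_(P <- sP | x \in P) (2%:E * j1 * (#|` P|%:R * a P)%:E) =
           (2%:E * j1) * \sum_(P <- sP | x \in P) (#|` P|%:R * a P)%:E)%E.
  by rewrite ge0_sume_distrr // => P _; rewrite lee_fin; apply: mulr_ge0.
apply: lee_wpmul2l; first by apply: mule_ge0.
by rewrite sumEFin.
Qed.

Lemma esum_seq_ge {R : realType} {T : choiceType} (D : set T) (s : seq T) (f : T -> R) :
  uniq s -> (forall x, x \in s -> D x) -> (forall x, 0 <= f x) ->
  ((\sum_(x <- s) f x)%:E <= \esum_(x in D) (f x)%:E)%E.
Proof.
move=> us sD f0; apply: esum_ge; exists [set` s].
  by split; [exact: finite_seq | move=> x /= xs; exact: sD].
by rewrite -sumEFin (fsbig_seq _ _ us).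
Qed.

Lemma jprime_ge {R : realType} {G : countType} {A : algType R[i]} (nrm : A -> R)
  (Phi : {fset G} -> A) (s : seq {fset G}) (z : G) :
  uniq s -> (forall a, 0 <= nrm a) ->
  ((\sum_(Q <- s | z \in Q) nrm (Phi Q))%:E <= jprime nrm Phi)%E.
Proof.
move=> us n0; rewrite -big_filter.
apply: le_trans (esum_seq_ge [set Y : {fset G} | z \in Y] _ _ _ _ _) _.
- exact: filter_uniq.
- by move=> x; rewrite mem_filter => /andP [].
- by move=> x.
apply: ereal_sup_ubound; by exists z.
Qed.

Lemma jsecond_ge {R : realType} {G : countType} {A : algType R[i]} (nrm : A -> R)
  (Phi : {fset G} -> A) (s : seq {fset G}) (z : G) :
  uniq s -> (forall a, 0 <= nrm a) ->
  ((\sum_(Q <- s | z \in Q) (#|` Q|%:R * nrm (Phi Q)))%:E <= jsecond nrm Phi)%E.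
Proof.
move=> us n0; rewrite -big_filter.
apply: le_trans (esum_seq_ge [set Y : {fset G} | z \in Y] _
   (fun Q => #|` Q|%:R * nrm (Phi Q)) _ _ _) _.
- exact: filter_uniq.
- by move=> x; rewrite mem_filter => /andP [].
- by move=> x; apply: mulr_ge0.
apply: ereal_sup_ubound; by exists z.
Qed.

Lemma fs_mem {R : realType} {A : algType R[i]} {T : choiceType} (D : set T) (F : T -> A) Y :
  Y \in finite_support 0 D F -> D Y /\ F Y <> 0.
Proof.
case: finite_supportP => // X _ _ eX YX.
have : [set` X] Y by [].
by rewrite eX => -[].
Qed.

Lemma fs_complete {R : realType} {A : algType R[i]} {T : choiceType} (D : set T) (F : T -> A) Y Y0 :
  Y0 \in finite_support 0 D F -> D Y -> F Y <> 0 -> Y \in finite_support 0 D F.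
Proof.
case: finite_supportP => // X _ _ eX _ DY FY.
have : (D `&` F @^-1` [set~ 0]) Y by split.
by rewrite -eX.
Qed.

Lemma fs_complete_fin {R : realType} {A : algType R[i]} {T : choiceType} (D : set T) (F : T -> A) Y :
  finite_set D -> D Y -> F Y <> 0 -> Y \in finite_support 0 D F.
Proof.
move=> fD DY FY; rewrite in_finite_support.
  by rewrite inE; split.
by apply: sub_finite_set fD => x [].
Qed.

Lemma fin_sub_finite {G : countType} (L : {fset G}) :
  finite_set [set Y : {fset G} | fin Y `<=` fin L].
Proof.
apply: sub_finite_set (finite_fset (fpowerset L)) => Y /= YL.
rewrite fpowersetE; apply/fsubsetP => x xY; exact: (YL x xY).
Qed.

Lemma disj_comm {R : realType} {G : countType} {A : algType R[i]} {star : A -> A}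
  {nrm : A -> R} {AX : {fset G} -> set A} {Phi : {fset G} -> A} (Y Z : {fset G}) :
  is_QMBS star nrm AX Phi -> A1 star nrm AX Phi -> (Y `&` Z)%fset = fset0 ->
  commutator (Phi Y) (Phi Z) = 0.
Proof.
case=> CA _ _ _ HPhi HA1 YZ; rewrite /commutator; apply/eqP; rewrite subr_eq0; apply/eqP.
apply: HA1 => B _ HB; apply: (HB Z); last by case: (HPhi Z).
move=> x xZ xY; have : x \in (Y `&` Z)%fset by rewrite inE; apply/andP; split.
by rewrite YZ inE.
Qed.

Lemma stepA {R : realType} {G : countType} {A : algType R[i]} {star : A -> A}
  {nrm : A -> R} {AX : {fset G} -> set A} {Phi : {fset G} -> A} (s1 s2 : seq {fset G}) :
  is_QMBS star nrm AX Phi -> A1 star nrm AX Phi -> uniq s1 -> uniq s2 ->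
  nrm (commutator (\sum_(Y <- s1) Phi Y) (\sum_(Z <- s2) Phi Z)) <=
  \sum_(Y <- s1) \sum_(Z <- s2)
    (if ((Y \notin s2) || (Z \notin s1)) && ((Y `&` Z)%fset != fset0)
     then 2 * nrm (Phi Y) * nrm (Phi Z) else 0).
Proof.
move=> Q HA1 u1 u2; have CA : is_CstarAlg star nrm by case: Q.
apply: le_trans (comm_split _ Phi s1 s2 CA u1 u2) _.
apply: ler_sum => Y _; apply: ler_sum => Z _.
case: ((Y \notin s2) || (Z \notin s1)) => /=; last by [].
case: eqP => [YZ|_] /=.
  by rewrite (disj_comm Y Z Q HA1 YZ) (nrm0L CA).
exact: (comm_boundL _ _ CA).
Qed.

Lemma finalB {R : realType} {G : countType} {A : algType R[i]} {star : A -> A}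
  {nrm : A -> R} {AX : {fset G} -> set A} {Phi : {fset G} -> A}
  (B : set G) (sP sQ : seq {fset G}) (cond : {fset G} -> {fset G} -> bool) (lhs : R) :
  is_QMBS star nrm AX Phi -> finite_set B -> uniq sP -> uniq sQ ->
  lhs <= \sum_(P <- sP) \sum_(Q <- sQ)
           (if cond P Q then 2 * nrm (Phi P) * nrm (Phi Q) else 0) ->
  (forall P Q, P \in sP -> Q \in sQ -> cond P Q ->
     (exists x, B x /\ x \in P) /\ (exists z, z \in P /\ z \in Q)) ->
  (lhs%:E <= 2%:E * jprime nrm Phi * jsecond nrm Phi * (#|` fset_set B|%:R)%:E)%E.
Proof.
move=> Q fB uP uQ Hl Hc; have CA : is_CstarAlg star nrm by case: Q.
have n0 := nrm_ge0 CA.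
apply: le_trans (ereal_bound (fun P => nrm (Phi P)) (enum_fset (fset_set B)) sP sQ
  _ _ _ _ _) => //; last first.
- by move=> x; exact: jsecond_ge.
- by move=> z; exact: jprime_ge.
rewrite lee_fin; apply: le_trans Hl _.
apply: (comb_bound (fun P => nrm (Phi P))) => //.
move=> P Q' PsP Qs c; have [[x [Bx xP]] zz] := Hc P Q' PsP Qs c; split => //.
by exists x; split => //; rewrite in_fset_set // inE.
Qed.

Lemma case1 {R : realType} {G : countType} {A : algType R[i]} {star : A -> A}
  {nrm : A -> R} {AX : {fset G} -> set A} {Phi : {fset G} -> A} (S : set G) (L : {fset G}) :
  is_QMBS star nrm AX Phi -> A1 star nrm AX Phi -> S `<=` fin L ->
  ((nrm (commutator (Hset Phi (fin L)) (Hmeet Phi S)))%:E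
       <= 2%:E * jprime nrm Phi * jsecond nrm Phi
          * (#|` fset_set (boundary Phi S)|%:R)%:E)%E.
Proof.
move=> Q HA1 SL; rewrite /Hset /Hmeet.
set s1 := finite_support 0 _ _; set s2 := finite_support 0 _ _.
have u1 : uniq s1 by exact: finite_support_uniq.
have u2 : uniq s2 by exact: finite_support_uniq.
apply: (finalB _ s2 s1
   (fun P Q => ((Q \notin s2) || (P \notin s1)) && ((Q `&` P)%fset != fset0)) _ Q) => //.
- apply: (@sub_finite_set _ _ (fin L)); first by move=> x [Sx _]; exact: SL.
  exact: finite_fset.
- apply: le_trans (stepA s1 s2 Q HA1 u1 u2) _.
  rewrite exchange_big /=; apply: ler_sum => Z _; apply: ler_sum => Y _.
  by case: ifP => // _; rewrite -!mulrA [nrm (Phi Y) * _]mulrC.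
move=> Z Y Zs2 Ys1 /andP [c1 /fset0Pn [z]]; rewrite inE => /andP [zY zZ].
have [[x [xZ Sx]] PZ] := fs_mem _ _ _ Zs2.
have [YL PY] := fs_mem _ _ _ Ys1.
have key : exists y, y \in Z /\ ~ S y.
  apply: contrapT => hn.
  have ZS : forall y, y \in Z -> S y.
    by move=> y yZ; apply: contrapT => nS; apply: hn; exists y.
  case/orP: c1 => /negP; apply.
    apply: (fs_complete _ _ Y Z Zs2 _ PY); by exists z; split => //; apply: ZS.
  apply: fs_complete_fin => //; first exact: fin_sub_finite.
  by move=> y yZ; apply: SL; apply: ZS.
split; last by exists z.
exists x; split => //; split => //; exists Z; split => //.
Qed.

Lemma case2 {R : realType} {G : countType} {A : algType R[i]} {star : A -> A}
  {nrm : A -> R} {AX : {fset G} -> set A} {Phi : {fset G} -> A} (S : set G) (L : {fset G}) :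
  is_QMBS star nrm AX Phi -> A1 star nrm AX Phi -> S `<=` fin L ->
  ((nrm (commutator (Hset Phi (fin L)) (Hset Phi S)))%:E
       <= 2%:E * jprime nrm Phi * jsecond nrm Phi
          * (#|` fset_set (boundary Phi S)|%:R)%:E)%E.
Proof.
move=> Q HA1 SL; rewrite /Hset.
set s1 := finite_support 0 [set Y | fin Y `<=` fin L] _.
set s2 := finite_support 0 [set Y | fin Y `<=` S] _.
have u1 : uniq s1 by exact: finite_support_uniq.
have u2 : uniq s2 by exact: finite_support_uniq.
apply: (finalB _ s1 s2
   (fun P Q => ((P \notin s2) || (Q \notin s1)) && ((P `&` Q)%fset != fset0)) _ Q) => //.
- apply: (@sub_finite_set _ _ (fin L)); first by move=> x [Sx _]; exact: SL.
  exact: finite_fset.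
- exact: (stepA s1 s2 Q HA1 u1 u2).
move=> Y Z Ys1 Zs2 /andP [c1 /fset0Pn [z]]; rewrite inE => /andP [zY zZ].
have [ZS PZ] := fs_mem _ _ _ Zs2.
have [YL PY] := fs_mem _ _ _ Ys1.
have key : exists y, y \in Y /\ ~ S y.
  apply: contrapT => hn.
  have YS : forall y, y \in Y -> S y.
    by move=> y yY; apply: contrapT => nS; apply: hn; exists y.
  case/orP: c1 => /negP; apply.
    apply: fs_complete_fin => //.
    apply: sub_finite_set (fin_sub_finite L) => W /= WS y yW; apply: SL; exact: WS.
  apply: fs_complete_fin => //; first exact: fin_sub_finite.
  by move=> y yZ; apply: SL; apply: ZS.
split; last by exists z.
exists z; split => //; split; first exact: ZS.
exists Y; split => //.
Qed.

Theorem lemma3p4 (R : realType) (G : countType) (d : G -> G -> R)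
  (A : algType R[i]) (star : A -> A) (nrm : A -> R)
  (AX : {fset G} -> set A) (Phi : {fset G} -> A) (r : R) (X : {fset G}) (n : nat) :
  is_metric d -> is_discrete d -> (exists F : R -> R, is_Ffunction d F) ->
  is_QMBS star nrm AX Phi -> A1 star nrm AX Phi ->
  bounded_interaction nrm Phi -> 0 < r -> finite_range Phi d r ->
  (0 < n)%N ->
  (forall L : {fset G}, Xint d X (n%:R + r) `<=` fin L ->
     ((nrm (commutator (Hset Phi (fin L)) (Hmeet Phi (Xint d X (n%:R + r)))))%:E
       <= 2%:E * jprime nrm Phi * jsecond nrm Phi
          * (#|` fset_set (boundary Phi (Xint d X (n%:R + r)))|%:R)%:E)%E) /\
  (forall L : {fset G}, Xnbhd d X (n%:R + r) `<=` fin L ->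
     ((nrm (commutator (Hset Phi (fin L)) (Hset Phi (Xnbhd d X (n%:R + r)))))%:E
       <= 2%:E * jprime nrm Phi * jsecond nrm Phi
          * (#|` fset_set (boundary Phi (Xnbhd d X (n%:R + r)))|%:R)%:E)%E).
Proof.
move=> _ _ _ Q HA1 _ _ _ _; split => L HL.
  exact: (case1 _ L Q HA1 HL).
exact: (case2 _ L Q HA1 HL).
Qed.
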